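(* Let $X_1,\dots,X_N$ be independent nonnegative random variables. (1) Suppose that for every $2\le j\le N$ there exists $\varphi_j\in\mathfrak{F}$ such that $\overline{F}_{X_j}(\varphi_j(x))=O(\overline{F}_{X_1}(x))$ and $\overline{F}_{X_1}(x/\varphi_j(x))=O(\overline{F}_{X_1}(x))$. Then $\overline{F}_{\prod_{i=1}^N X_i}(x)=O(\overline{F}_{X_1}(x))$. (2) Suppose that for every $2\le j\le N$ there exists $\varphi_j\in\mathfrak{F}$ such that $\overline{F}_{X_j}(\varphi_j(x))=O(\overline{F}_{X_1}(x))$ and $\overline{F}_{X_1}(x-\varphi_j(x))=O(\overline{F}_{X_1}(x))$. Then $\overline{F}_{\sum_{i=1}^N X_i}(x)=O(\overline{F}_{X_1}(x))$.
   Context: $\overline{F}_Y(x)=\Pr(Y>x)$; $f(x)=O(g(x))$ means $\limsup_{x\to\infty}f(x)/g(x)<\infty$. $\mathfrak{F}$ is the class of functions $\varphi:\mathbb{R}_{\ge0}\to\mathbb{R}_{\ge0}$ with $\lim_{x\to\infty}\varphi(x)=\infty$ and $\lim_{x\to\infty}\varphi(x)/x=0$. *)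

(* Defs.v *)
From HB Require Import structures.
From mathcomp Require Import all_boot all_order all_algebra.
From mathcomp Require Import all_classical all_reals all_analysis.
Set Implicit Arguments. Unset Strict Implicit. Unset Printing Implicit Defensive.
Import Order.TTheory GRing.Theory Num.Theory.
Import numFieldNormedType.Exports.
Local Open Scope classical_set_scope.
Local Open Scope ring_scope.

Definition tail {d} {T : measurableType d} {R : realType}
  (P : probability T R) (Y : T -> R) (x : R) : R :=
  fine (P [set w | x < Y w]).

Definition mutually_independent {d} {T : measurableType d} {R : realType}
  (P : probability T R) (n : nat) (X : 'I_n -> {RV P >-> R}) : Prop :=
  forall (J : {set 'I_n}) (B : 'I_n -> set R),
    (forall i, measurable (B i)) ->
    P (\bigcap_(i in [set` J]) (X i @^-1` B i)) =
    (\prod_(i in J) P (X i @^-1` B i))%E.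

(* The class \mathfrak F: phi : R_{>=0} -> R_{>=0} with phi(x) -> +oo and
   phi(x)/x -> 0 as x -> +oo.  phi is given as a function on R; only its
   values on [0,+oo) matter. *)
Definition frakF {R : realType} (phi : R -> R) : Prop :=
  (forall x, 0 <= x -> 0 <= phi x) /\
  phi x @[x --> +oo] --> +oo /\
  (phi x / x) @[x --> +oo] --> 0.

Definition bigO_pinfty {R : realType} (f g : R -> R) : Prop :=
  exists C : R, \forall x \near +oo, f x <= C * g x.

(* Main.v *)
Require Import Defs.
From HB Require Import structures.
From mathcomp Require Import all_boot all_order all_algebra.
From mathcomp Require Import all_classical all_reals all_analysis.
From mathcomp Require Import lra.
Import Order.TTheory GRing.Theory Num.Theory.
Import numFieldNormedType.Exports.
Local Open Scope classical_set_scope.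
Local Open Scope ring_scope.

Section Helpers.
Context (d : measure_display) (T : measurableType d) (R : realType)
  (P : probability T R).

Lemma mset {Y : T -> R} : measurable_fun setT Y -> forall x : R,
  measurable [set w | x < Y w].
Proof.
move=> mY x; have := mY measurableT `]x, +oo[%classic (measurable_itv _).
rewrite setTI; congr measurable; apply/seteqP; split => w /=;
  by rewrite in_itv /= andbT.
Qed.

Lemma tail_ge0 (Y : T -> R) x : 0 <= tail P Y x.
Proof. by apply: fine_ge0; exact: measure_ge0. Qed.

Lemma tail_union (Y Z W : T -> R) x a b :
  measurable_fun setT Y -> measurable_fun setT Z -> measurable_fun setT W ->
  (forall w, x < W w -> a < Z w \/ b < Y w) ->
  tail P W x <= tail P Z a + tail P Y b.
Proof.
move=> mY mZ mW H; rewrite /tail -fineD; last 2 first.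
- by apply: fin_num_measure; exact: mset.
- by apply: fin_num_measure; exact: mset.
apply: fine_le.
- by apply: fin_num_measure; exact: mset.
- by rewrite fin_numD !fin_num_measure //; exact: mset.
have hU := measureU2 P (mset mZ a) (mset mY b).
apply: le_trans hU.
apply: le_measure; rewrite ?inE.
- exact: mset.
- by apply: measurableU; exact: mset.
by move=> w /= /H.
Qed.

Lemma bigO_nonneg (f g : R -> R) : (forall x, 0 <= g x) ->
  bigO_pinfty f g -> exists2 C, 0 <= C & \forall x \near +oo, f x <= C * g x.
Proof.
move=> g0 [C HC]; exists `|C|; first exact: normr_ge0.
near=> x; apply: (le_trans (near HC x _)); first done.
exact: (ler_wpM2r (g0 x) (ler_norm C)).
Unshelve. all: end_near.
Qed.

Lemma key {g : R -> R} {Y Z W : T -> R} {phi h : R -> R} :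
  (forall x, 0 <= g x) ->
  measurable_fun setT Y -> measurable_fun setT Z -> measurable_fun setT W ->
  h x @[x --> +oo] --> +oo ->
  (\forall x \near +oo, forall w, x < W w -> phi x < Z w \/ h x < Y w) ->
  bigO_pinfty (tail P Y) g ->
  bigO_pinfty (fun x => tail P Z (phi x)) g ->
  bigO_pinfty (fun x => g (h x)) g ->
  bigO_pinfty (tail P W) g.
Proof.
move=> g0 mY mZ mW hoo Hinc OY OZ Oh.
have [C1 C10 H1] := bigO_nonneg _ _ g0 OY.
have [C2 C20 H2] := bigO_nonneg _ _ g0 OZ.
have [C3 C30 H3] := bigO_nonneg _ _ g0 Oh.
have H1' : \forall x \near +oo, tail P Y (h x) <= C1 * g (h x).
  exact: hoo H1.
exists (C2 + C1 * C3); near=> x.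
apply: le_trans (tail_union _ _ _ _ _ _ mY mZ mW (near Hinc x _)) _; first done.
rewrite mulrDl; apply: lerD; first by apply: (near H2 x _).
apply: le_trans (near H1' x _) _; first done.
rewrite -mulrA; apply: ler_wpM2l => //.
by apply: (near H3 x _).
Unshelve. all: end_near.
Qed.

End Helpers.

Section Lim.
Context (R : realType).

Lemma ev_pos {phi : R -> R} : frakF phi -> \forall x \near +oo, 0 < phi x.
Proof. by case=> _ [/cvgryPgt H _]; exact: H. Qed.

Lemma ev_gt (A : R) : \forall x \near +oo, A < x.
Proof. exact: nbhs_pinfty_gt (num_real A). Qed.

Lemma ev_small {phi : R -> R} {e : R} : frakF phi -> 0 < e ->
  \forall x \near +oo, `|phi x / x| < e.
Proof. by case=> _ [_ /cvgr0Pnorm_lt H] e0; exact: H. Qed.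

Lemma div_oo {phi : R -> R} : frakF phi -> (x / phi x) @[x --> +oo] --> +oo.
Proof.
move=> hF; apply/cvgryPgt => A.
set B := `|A| + 1.
have B0 : 0 < B by rewrite /B; have := normr_ge0 A; lra.
have AB : A < B by rewrite /B; have := ler_norm A; lra.
have iB : 0 < B^-1 by rewrite invr_gt0.
near=> x.
have px : 0 < phi x by apply: (near (ev_pos hF) x _).
have x0 : 0 < x by apply: (near (ev_gt 0) x _).
have hs : `|phi x / x| < B^-1 by apply: (near (ev_small hF iB) x _).
apply: (lt_trans AB); rewrite ltr_pdivlMr //.
have : phi x / x < B^-1 by exact: le_lt_trans (ler_norm _) hs.
rewrite ltr_pdivrMr // => h.
by rewrite mulrC -ltr_pdivlMr // mulrC.
Unshelve. all: end_near.
Qed.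

Lemma sub_oo {phi : R -> R} : frakF phi -> (x - phi x) @[x --> +oo] --> +oo.
Proof.
move=> hF; apply/cvgryPgt => A.
have i2 : 0 < 2^-1 :> R by rewrite invr_gt0.
near=> x.
have x0 : 2 * A < x by apply: (near (ev_gt (2 * A)) x _).
have x1 : 0 < x by apply: (near (ev_gt 0) x _).
have hs : `|phi x / x| < 2^-1 by apply: (near (ev_small hF i2) x _).
have : phi x / x < 2^-1 by exact: le_lt_trans (ler_norm _) hs.
rewrite ltr_pdivrMr // => h.
lra.
Unshelve. all: end_near.
Qed.
End Lim.

Theorem theorem11 (d : measure_display) (T : measurableType d) (R : realType)
  (P : probability T R) (N : nat) (X : 'I_N.+1 -> {RV P >-> R}) :
  mutually_independent X ->
  (forall i w, 0 <= X i w) ->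
  ((forall j : 'I_N.+1, j != ord0 -> exists phi : R -> R, frakF phi /\
       bigO_pinfty (fun x => tail P (X j) (phi x)) (tail P (X ord0)) /\
       bigO_pinfty (fun x => tail P (X ord0) (x / phi x)) (tail P (X ord0))) ->
    bigO_pinfty (tail P (fun w => \prod_(i < N.+1) X i w)) (tail P (X ord0)))
  /\
  ((forall j : 'I_N.+1, j != ord0 -> exists phi : R -> R, frakF phi /\
       bigO_pinfty (fun x => tail P (X j) (phi x)) (tail P (X ord0)) /\
       bigO_pinfty (fun x => tail P (X ord0) (x - phi x)) (tail P (X ord0))) ->
    bigO_pinfty (tail P (fun w => \sum_(i < N.+1) X i w)) (tail P (X ord0))).
Proof.
move=> _ X0.
have g0 : forall x, 0 <= tail P (X ord0) x by move=> x; exact: tail_ge0.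
have mX : forall i, measurable_fun setT (X i) by move=> i; exact: measurable_funPT.
have i0 : (inord 0 : 'I_N.+1) = ord0 by apply: val_inj; rewrite /= inordK.
have refl : bigO_pinfty (tail P (X ord0)) (tail P (X ord0)).
  by exists 1; near=> x; rewrite mul1r.
split=> H.
- pose F k w := \prod_(i < k.+1) X (inord i) w.
  have mF : forall k, measurable_fun setT (F k).
    by move=> k; apply: measurable_prod => i _; exact: mX.
  have F0 : forall k w, 0 <= F k w.
    by move=> k w; apply: prodr_ge0 => i _; exact: X0.
  have IH : forall k, (k <= N)%N -> bigO_pinfty (tail P (F k)) (tail P (X ord0)).
    elim=> [_|k ih kN].
      have -> : F 0%N = X ord0 by apply/funext => w; rewrite /F big_ord1 /= i0.
      exact: refl.
    have jn0 : (inord k.+1 : 'I_N.+1) != ord0.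
      by apply/eqP => /(congr1 val) /=; rewrite inordK.
    have [phi [hF [OZ Oh]]] := H _ jn0.
    apply: (@key _ _ _ P _ (F k) (X (inord k.+1)) _ phi
      (fun x => x / phi x)) => //.
    + exact: div_oo.
    + near=> x => w.
      have px : 0 < phi x by apply: (near (@ev_pos R phi hF) x _).
      rewrite /F big_ord_recr /= -/(F k w).
      move=> hx.
      have [hZ|hZ] := ltP (phi x) (X (inord k.+1) w); first by left.
      right; rewrite ltNge; apply/negP => hY.
      move: hx; rewrite ltNge => /negP; apply.
      apply: (le_trans (ler_pM (F0 k w) (X0 _ w) hY hZ)).
      by rewrite divfK ?gt_eqF.
    + by apply: ih; apply: ltnW.
  have := IH N (leqnn N).
  suff -> : F N = (fun w => \prod_(i < N.+1) X i w) by [].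
  apply/funext => w; rewrite /F; apply: eq_bigr => i _; by rewrite inord_val.
- pose F k w := \sum_(i < k.+1) X (inord i) w.
  have mF : forall k, measurable_fun setT (F k).
    by move=> k; apply: measurable_sum => i; exact: mX.
  have IH : forall k, (k <= N)%N -> bigO_pinfty (tail P (F k)) (tail P (X ord0)).
    elim=> [_|k ih kN].
      have -> : F 0%N = X ord0 by apply/funext => w; rewrite /F big_ord1 /= i0.
      exact: refl.
    have jn0 : (inord k.+1 : 'I_N.+1) != ord0.
      by apply/eqP => /(congr1 val) /=; rewrite inordK.
    have [phi [hF [OZ Oh]]] := H _ jn0.
    apply: (@key _ _ _ P _ (F k) (X (inord k.+1)) _ phi
      (fun x => x - phi x)) => //.
    + exact: sub_oo.
    + near=> x => w.
      rewrite /F big_ord_recr /= -/(F k w).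
      move=> hx.
      have [hZ|hZ] := ltP (phi x) (X (inord k.+1) w); first by left.
      right; rewrite ltNge; apply/negP => hY.
      move: hx; rewrite ltNge => /negP; apply.
      lra.
    + by apply: ih; apply: ltnW.
  have := IH N (leqnn N).
  suff -> : F N = (fun w => \sum_(i < N.+1) X i w) by [].
  apply/funext => w; rewrite /F; apply: eq_bigr => i _; by rewrite inord_val.
Unshelve. all: end_near.
Qed.
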